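(* Let $A,B$ be non-empty sets, $I$ a non-empty index set, $\{V_i\}_{i\in I}\subseteq\mathcal R(A)$, $\{W_i\}_{i\in I}\subseteq\mathcal R(B)$, and let $\phi^{(1)},\dots,\phi^{(6)}:\mathcal R(A,B)\to\mathcal R(A,B)$ be defined by $\phi^{(1)}(R)=\bigwedge_{i\in I}[(W_i\circ R^{-1})\backslash V_i]^{-1}$, $\phi^{(2)}(R)=\bigwedge_{i\in I}(R\circ W_i)/V_i$, $\phi^{(3)}(R)=\bigwedge_{i\in I}[(W_i\circ R^{-1})\backslash V_i]^{-1}\wedge[(V_i\circ R)\backslash W_i]$, $\phi^{(4)}(R)=\bigwedge_{i\in I}[(R\circ W_i)/V_i]\wedge[(R^{-1}\circ V_i)/W_i]^{-1}$, $\phi^{(5)}(R)=\bigwedge_{i\in I}[(R\circ W_i)/V_i]\wedge[(V_i\circ R)\backslash W_i]$, $\phi^{(6)}(R)=\bigwedge_{i\in I}[(W_i\circ R^{-1})\backslash V_i]^{-1}\wedge[(R^{-1}\circ V_i)/W_i]^{-1}$. Then each $\phi^{(t)}$, $t\in\{1,\dots,6\}$, is isotone, and if $A$, $B$ and $I$ are finite, then each $\phi^{(t)}$ is image-localized.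
   Context: $\mathcal L=(L,\wedge,\vee,\otimes,\to,0,1)$ is a complete residuated lattice. For non-empty sets $X,Y$, $\mathcal R(X,Y)$ is the set of fuzzy relations $X\times Y\to L$, $\mathcal R(X)=\mathcal R(X,X)$, ordered pointwise with pointwise meets; $R^{-1}(y,x)=R(x,y)$; $(R\circ S)(x,t)=\bigvee_{y}R(x,y)\otimes S(y,t)$. Residuals: for $S\in\mathcal R(X,Y)$, $T\in\mathcal R(X)$, $T'\in\mathcal R(Y)$: $(S/T)(x,y)=\bigwedge_{x'\in X}(T(x',x)\to S(x',y))$ and $(S\backslash T')(x,y)=\bigwedge_{y'\in Y}(T'(y,y')\to S(x,y'))$. A map $\phi:\mathcal R(A,B)\to\mathcal R(A,B)$ is isotone if $R\le S$ implies $\phi(R)\le\phi(S)$. It is image-localized if there is a finite $K\subseteq L$ such that for every $R\in\mathcal R(A,B)$, $\mathrm{im}(\phi(R))\subseteq\langle K\cup\mathrm{im}(R)\rangle$, where $\mathrm{im}$ denotes the set of values and $\langle M\rangle$ is the subalgebra of $(L,\wedge,\vee,\otimes,\to,0,1)$ generated by $M$. *)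

(* Defs.v *)
From Stdlib Require Import List.
Import ListNotations.
Set Implicit Arguments.

Record CRL := {
  car :> Type;
  le : car -> car -> Prop;
  meet : car -> car -> car;
  join : car -> car -> car;
  otimes : car -> car -> car;
  impl : car -> car -> car;
  bot : car;
  top : car;
  inf : (car -> Prop) -> car;
  sup : (car -> Prop) -> car;
  le_refl : forall a, le a a;
  le_trans : forall a b c, le a b -> le b c -> le a c;
  le_antisym : forall a b, le a b -> le b a -> a = b;
  meet_glb : forall a b c, le c (meet a b) <-> (le c a /\ le c b);
  join_lub : forall a b c, le (join a b) c <-> (le a c /\ le b c);
  bot_least : forall a, le bot a;
  top_greatest : forall a, le a top;
  inf_lb : forall (S : car -> Prop) a, S a -> le (inf S) a;
  inf_glb : forall (S : car -> Prop) c, (forall a, S a -> le c a) -> le c (inf S);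
  sup_ub : forall (S : car -> Prop) a, S a -> le a (sup S);
  sup_lub : forall (S : car -> Prop) c, (forall a, S a -> le a c) -> le (sup S) c;
  otimes_comm : forall a b, otimes a b = otimes b a;
  otimes_assoc : forall a b c, otimes a (otimes b c) = otimes (otimes a b) c;
  otimes_top : forall a, otimes a top = a;
  adjoint : forall a b c, le (otimes a b) c <-> le a (impl b c)
}.

Section Rel.
Variable L : CRL.

Definition infi {T : Type} (f : T -> L) : L := inf L (fun a => exists t, a = f t).
Definition supi {T : Type} (f : T -> L) : L := sup L (fun a => exists t, a = f t).

Definition frel (X Y : Type) := X -> Y -> L.

Definition rle {X Y : Type} (R S : frel X Y) : Prop :=
  forall x y, le L (R x y) (S x y).

Definition rinv {X Y : Type} (R : frel X Y) : frel Y X := fun y x => R x y.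

Definition rcomp {X Y Z : Type} (R : frel X Y) (S : frel Y Z) : frel X Z :=
  fun x t => supi (fun y => otimes L (R x y) (S y t)).

Definition rmeet {X Y : Type} (R S : frel X Y) : frel X Y :=
  fun x y => meet L (R x y) (S x y).

Definition rinfi {I X Y : Type} (F : I -> frel X Y) : frel X Y :=
  fun x y => infi (fun i => F i x y).

(** right residual S/T, with S in R(X,Y), T in R(X) *)
Definition rdiv {X Y : Type} (S : frel X Y) (T : frel X X) : frel X Y :=
  fun x y => infi (fun x' => impl L (T x' x) (S x' y)).

(** left residual S\T', with S in R(X,Y), T' in R(Y) *)
Definition ldiv {X Y : Type} (S : frel X Y) (T' : frel Y Y) : frel X Y :=
  fun x y => infi (fun y' => impl L (T' y y') (S x y')).

Definition isotone {A B : Type} (phi : frel A B -> frel A B) : Prop :=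
  forall R S, rle R S -> rle (phi R) (phi S).

Inductive gen (M : L -> Prop) : L -> Prop :=
  | gen_base : forall a, M a -> gen M a
  | gen_bot : gen M (bot L)
  | gen_top : gen M (top L)
  | gen_meet : forall a b, gen M a -> gen M b -> gen M (meet L a b)
  | gen_join : forall a b, gen M a -> gen M b -> gen M (join L a b)
  | gen_otimes : forall a b, gen M a -> gen M b -> gen M (otimes L a b)
  | gen_impl : forall a b, gen M a -> gen M b -> gen M (impl L a b).

Definition im {X Y : Type} (R : frel X Y) : L -> Prop :=
  fun a => exists x y, a = R x y.

Definition image_localized {A B : Type} (phi : frel A B -> frel A B) : Prop :=
  exists K : list L, forall R a, im (phi R) a ->
    gen (fun b => In b K \/ im R b) a.

Section Phis.
Variables (A B I : Type) (V : I -> frel A A) (W : I -> frel B B).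

Definition phi1 (R : frel A B) : frel A B :=
  rinfi (fun i => rinv (ldiv (rcomp (W i) (rinv R)) (V i))).
Definition phi2 (R : frel A B) : frel A B :=
  rinfi (fun i => rdiv (rcomp R (W i)) (V i)).
Definition phi3 (R : frel A B) : frel A B :=
  rinfi (fun i => rmeet (rinv (ldiv (rcomp (W i) (rinv R)) (V i)))
                        (ldiv (rcomp (V i) R) (W i))).
Definition phi4 (R : frel A B) : frel A B :=
  rinfi (fun i => rmeet (rdiv (rcomp R (W i)) (V i))
                        (rinv (rdiv (rcomp (rinv R) (V i)) (W i)))).
Definition phi5 (R : frel A B) : frel A B :=
  rinfi (fun i => rmeet (rdiv (rcomp R (W i)) (V i))
                        (ldiv (rcomp (V i) R) (W i))).
Definition phi6 (R : frel A B) : frel A B :=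
  rinfi (fun i => rmeet (rinv (ldiv (rcomp (W i) (rinv R)) (V i)))
                        (rinv (rdiv (rcomp (rinv R) (V i)) (W i)))).

Definition phis : list (frel A B -> frel A B) := [phi1; phi2; phi3; phi4; phi5; phi6].
End Phis.
End Rel.

Definition finite_type (T : Type) : Prop := exists l : list T, forall x, In x l.

(* Main.v *)
Require Import Defs.
From Stdlib Require Import List.
Import ListNotations.

Section Aux.
Variable L : CRL.

Lemma mp_le (a c : L) : le L (otimes L (impl L c a) c) a.
Proof. apply adjoint. apply le_refl. Qed.

Lemma impl_mono_r (a b c : L) : le L a b -> le L (impl L c a) (impl L c b).
Proof. intro H. apply adjoint. eapply le_trans; [apply mp_le| exact H]. Qed.

Lemma otimes_mono_l (a b c : L) : le L a b -> le L (otimes L a c) (otimes L b c).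
Proof. intro H. apply adjoint. eapply le_trans; [exact H|]. apply adjoint, le_refl. Qed.

Lemma otimes_mono (a b c d : L) : le L a b -> le L c d -> le L (otimes L a c) (otimes L b d).
Proof.
  intros H1 H2. eapply le_trans; [apply otimes_mono_l; exact H1|].
  rewrite (otimes_comm L b c), (otimes_comm L b d). apply otimes_mono_l; exact H2.
Qed.

Lemma meet_mono (a b c d : L) : le L a b -> le L c d -> le L (meet L a c) (meet L b d).
Proof.
  intros H1 H2. apply meet_glb. pose proof (proj1 (meet_glb L a c (meet L a c)) (le_refl _ _)) as [X Y].
  split; [eapply le_trans; [exact X|exact H1] | eapply le_trans; [exact Y|exact H2]].
Qed.

Lemma infi_mono {T : Type} (f g : T -> L) : (forall t, le L (f t) (g t)) -> le L (infi L f) (infi L g).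
Proof.
  intro H. apply inf_glb. intros a [t ->]. eapply le_trans; [apply inf_lb; exists t; reflexivity|]. apply H.
Qed.

Lemma supi_mono {T : Type} (f g : T -> L) : (forall t, le L (f t) (g t)) -> le L (supi L f) (supi L g).
Proof.
  intro H. apply sup_lub. intros a [t ->]. eapply le_trans; [apply H|]. apply sup_ub; exists t; reflexivity.
Qed.

Lemma infi_fold {T : Type} (l : list T) (f : T -> L) : (forall t, In t l) ->
  infi L f = fold_right (fun t acc => meet L (f t) acc) (top L) l.
Proof.
  intro Hl. apply le_antisym.
  - clear Hl. induction l as [|t l IH]; simpl. apply top_greatest.
    apply meet_glb; split; [apply inf_lb; exists t; reflexivity| exact IH].
  - apply inf_glb. intros a [t ->]. specialize (Hl t). clear -Hl. induction l as [|u l IH]; simpl in *.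
    contradiction.
    destruct Hl as [->|Hl].
    + pose proof (proj1 (meet_glb L (f t) (fold_right (fun t acc => meet L (f t) acc) (top L) l) _) (le_refl _ _)) as [X _]. exact X.
    + pose proof (proj1 (meet_glb L (f u) (fold_right (fun t acc => meet L (f t) acc) (top L) l) _) (le_refl _ _)) as [_ X].
      eapply le_trans; [exact X| auto].
Qed.

Lemma supi_fold {T : Type} (l : list T) (f : T -> L) : (forall t, In t l) ->
  supi L f = fold_right (fun t acc => join L (f t) acc) (bot L) l.
Proof.
  intro Hl. apply le_antisym.
  - apply sup_lub. intros a [t ->]. specialize (Hl t). clear -Hl. induction l as [|u l IH]; simpl in *.
    contradiction.
    destruct Hl as [->|Hl].
    + pose proof (proj1 (join_lub L (f t) (fold_right (fun t acc => join L (f t) acc) (bot L) l) _) (le_refl _ _)) as [X _]. exact X.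
    + pose proof (proj1 (join_lub L (f u) (fold_right (fun t acc => join L (f t) acc) (bot L) l) _) (le_refl _ _)) as [_ X].
      eapply le_trans; [auto| exact X].
  - clear Hl. induction l as [|t l IH]; simpl. apply bot_least.
    apply join_lub; split; [apply sup_ub; exists t; reflexivity| exact IH].
Qed.

Lemma gen_infi {T : Type} (M : L -> Prop) (f : T -> L) : finite_type T ->
  (forall t, gen L M (f t)) -> gen L M (infi L f).
Proof.
  intros [l Hl] H. rewrite (infi_fold l f Hl). clear Hl. induction l; simpl.
  apply gen_top. apply gen_meet; auto.
Qed.

Lemma gen_supi {T : Type} (M : L -> Prop) (f : T -> L) : finite_type T ->
  (forall t, gen L M (f t)) -> gen L M (supi L f).
Proof.
  intros [l Hl] H. rewrite (supi_fold l f Hl). clear Hl. induction l; simpl.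
  apply gen_bot. apply gen_join; auto.
Qed.
End Aux.

Ltac iso_tac H :=
  repeat (intros; cbv beta; first
    [ apply infi_mono | apply supi_mono | apply meet_mono | apply impl_mono_r
    | apply otimes_mono | apply H | apply le_refl ]).

Ltac gen_tac fA fB fI :=
  repeat (intros; cbv beta; first
    [ apply gen_infi; [first [exact fA | exact fB | exact fI] |]
    | apply gen_supi; [first [exact fA | exact fB | exact fI] |]
    | apply gen_meet | apply gen_otimes | apply gen_impl
    | apply gen_base ]).

Theorem theorem5p2 (L : CRL) (A B I : Type)
  (hA : inhabited A) (hB : inhabited B) (hI : inhabited I)
  (V : I -> frel L A A) (W : I -> frel L B B) :
  (forall phi, In phi (phis V W) -> isotone phi) /\
  (finite_type A -> finite_type B -> finite_type I ->
   forall phi, In phi (phis V W) -> image_localized phi).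
Proof.
  split.
  - intros phi Hphi. simpl in Hphi.
    intros R S H. unfold rle in *.
    repeat destruct Hphi as [<-|Hphi]; try contradiction;
    unfold phi1, phi2, phi3, phi4, phi5, phi6, rinfi, rinv, ldiv, rdiv, rcomp, rmeet;
    iso_tac H.
  - intros fA fB fI phi Hphi.
    pose proof fA as [lA HA]. pose proof fB as [lB HB]. pose proof fI as [lI HI].
    exists (flat_map (fun i => flat_map (fun a => map (V i a) lA) lA
                            ++ flat_map (fun b => map (W i b) lB) lB) lI).
    assert (KV : forall i a a', In (V i a a') (flat_map (fun i => flat_map (fun a => map (V i a) lA) lA
                            ++ flat_map (fun b => map (W i b) lB) lB) lI)).
    { intros. apply in_flat_map. exists i. split; auto. apply in_app_iff. left.
      apply in_flat_map. exists a. split; auto. apply in_map. auto. }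
    assert (KW : forall i b b', In (W i b b') (flat_map (fun i => flat_map (fun a => map (V i a) lA) lA
                            ++ flat_map (fun b => map (W i b) lB) lB) lI)).
    { intros. apply in_flat_map. exists i. split; auto. apply in_app_iff. right.
      apply in_flat_map. exists b. split; auto. apply in_map. auto. }
    intros R a [x [y ->]]. simpl in Hphi.
    repeat destruct Hphi as [<-|Hphi]; try contradiction;
    unfold phi1, phi2, phi3, phi4, phi5, phi6, rinfi, rinv, ldiv, rdiv, rcomp, rmeet;
    gen_tac fA fB fI;
    first [ left; apply KV | left; apply KW | right; eexists; eexists; reflexivity ].
Qed.
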